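(* Let $E$ be a real Hilbert space with $\dim(E)\ge2$, $h\in E$ a unit vector, $H^+=\{x\in E\mid (h,x)>0\}$, and define $\preceq$ on $H^+$ by $x\preceq y\iff\|x-y_\perp\|\le y_h$. Then (a) every finite subset of $H^+$ has a right bound in $(H^+,\preceq)$; (b) a pair $x,y\in H^+$ has a left bound in $(H^+,\preceq)$ if and only if $\|x_\perp-y_\perp\|<x_h+y_h$.
   Context: For $x\in E$, $x_h=(h,x)$ and $x_\perp=x-(h,x)h$. A right bound of $P$ is an $s\in H^+$ with $p\preceq s$ for all $p\in P$; a left bound is an $s\in H^+$ with $s\preceq p$ for all $p\in P$. *)

(* Defs.v *)
From mathcomp Require Import all_boot all_order all_algebra.
From mathcomp Require Import reals.
Set Implicit Arguments. Unset Strict Implicit. Unset Printing Implicit Defensive.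
Import Order.TTheory GRing.Theory Num.Theory.
Local Open Scope ring_scope.

Section Hilbert.
Variables (R : realType) (V : lmodType R) (ip : V -> V -> R).

Definition hnorm (x : V) : R := Num.sqrt (ip x x).

Record is_hilbert : Prop := IsHilbert {
  ip_sym : forall x y, ip x y = ip y x;
  ip_linl : forall a x y z, ip (a *: x + y) z = a * ip x z + ip y z;
  ip_ge0 : forall x, 0 <= ip x x;
  ip_eq0 : forall x, ip x x = 0 -> x = 0;
  ip_complete : forall u : nat -> V,
    (forall e : R, 0 < e -> exists N : nat, forall m n : nat,
        (N <= m)%N -> (N <= n)%N -> hnorm (u m - u n) < e) ->
    exists l : V, forall e : R, 0 < e -> exists N : nat, forall n : nat,
        (N <= n)%N -> hnorm (u n - l) < e
}.

Definition dim_ge2 : Prop :=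
  exists u v : V, forall a b : R, a *: u + b *: v = 0 -> a = 0 /\ b = 0.

Variable h : V.
Definition comp_h (x : V) : R := ip h x.
Definition perp (x : V) : V := x - ip h x *: h.
Definition Hplus (x : V) : Prop := 0 < ip h x.
Definition prec (x y : V) : Prop := hnorm (x - perp y) <= comp_h y.

Definition right_bound (P : V -> Prop) (s : V) : Prop :=
  Hplus s /\ forall p, P p -> prec p s.
Definition left_bound (P : V -> Prop) (s : V) : Prop :=
  Hplus s /\ forall p, P p -> prec s p.
End Hilbert.

(* Main.v *)
Require Import Defs.
From mathcomp Require Import all_boot all_order all_algebra.
From mathcomp Require Import reals.
From mathcomp Require Import ring lra.
Import Order.TTheory GRing.Theory Num.Theory.
Local Open Scope ring_scope.

Set Implicit Arguments.
Section Aux.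
Variables (R : realType) (V : lmodType R) (ip : V -> V -> R).
Hypothesis HV : is_hilbert ip.

Lemma ip0l z : ip 0 z = 0.
Proof.
have := ip_linl HV 1 0 0 z; rewrite scaler0 addr0 mul1r => H.
lra.
Qed.

Lemma ipDl x y z : ip (x + y) z = ip x z + ip y z.
Proof. by have := ip_linl HV 1 x y z; rewrite scale1r mul1r. Qed.

Lemma ipZl a x z : ip (a *: x) z = a * ip x z.
Proof. by have := ip_linl HV a x 0 z; rewrite addr0 ip0l addr0. Qed.

Lemma ipNl x z : ip (- x) z = - ip x z.
Proof. by rewrite -scaleN1r ipZl mulN1r. Qed.

Lemma ipBl x y z : ip (x - y) z = ip x z - ip y z.
Proof. by rewrite ipDl ipNl. Qed.

Lemma ipDr x y z : ip z (x + y) = ip z x + ip z y.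
Proof. by rewrite !(ip_sym HV z) ipDl. Qed.

Lemma ipZr a x z : ip z (a *: x) = a * ip z x.
Proof. by rewrite !(ip_sym HV z) ipZl. Qed.

Lemma ipNr x z : ip z (- x) = - ip z x.
Proof. by rewrite !(ip_sym HV z) ipNl. Qed.

Lemma ipBr x y z : ip z (x - y) = ip z x - ip z y.
Proof. by rewrite !(ip_sym HV z) ipBl. Qed.

Lemma hnorm_ge0 x : 0 <= hnorm ip x.
Proof. exact: sqrtr_ge0. Qed.

Lemma hnorm_sq x : hnorm ip x ^+ 2 = ip x x.
Proof. by rewrite /hnorm sqr_sqrtr // ip_ge0. Qed.

Lemma CS u v : ip u v ^+ 2 <= ip u u * ip v v.
Proof.
have [B0|Bn0] := eqVneq (ip v v) 0.
  by rewrite (ip_eq0 HV B0) ip0l !(ip_sym HV u) ip0l expr2 !mul0r mulr0.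
have Bp : 0 < ip v v by rewrite lt_def Bn0 ip_ge0.
have := ip_ge0 HV (ip v v *: u - ip u v *: v).
rewrite !ipBl !ipBr !ipZl !ipZr (ip_sym HV v u) => H.
have : 0 <= ip v v * (ip u u * ip v v - ip u v ^+ 2).
  by move: H; congr (_ <= _); ring.
by rewrite pmulr_rge0 // subr_ge0.
Qed.

Lemma ip_abs u v : `|ip u v| <= hnorm ip u * hnorm ip v.
Proof.
have := CS u v; rewrite -!hnorm_sq -exprMn -real_normK ?num_real //.
by rewrite ler_pXn2r ?nnegrE ?mulr_ge0 ?hnorm_ge0.
Qed.

Lemma hnorm_triB u v : hnorm ip (u - v) <= hnorm ip u + hnorm ip v.
Proof.
have h1 := ip_abs u v; have h2 := hnorm_sq (u - v).
have h3 := hnorm_sq u; have h4 := hnorm_sq v.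
rewrite ipBl !ipBr (ip_sym HV v u) in h2.
have := hnorm_ge0 (u - v); have := hnorm_ge0 u; have := hnorm_ge0 v.
have := ler_norm (- ip u v); rewrite normrN.
move: h1 h2 h3 h4.
set a := hnorm ip (u - v); set b := hnorm ip u; set c := hnorm ip v.
move=> *; nra.
Qed.

Lemma hnorm_le x c : 0 <= c -> ip x x <= c ^+ 2 -> hnorm ip x <= c.
Proof.
move=> c0; rewrite -hnorm_sq => H.
by rewrite -(ler_pXn2r (n:=2)) ?nnegrE ?hnorm_ge0.
Qed.

Lemma hnorm_lt x c : 0 <= c -> ip x x < c ^+ 2 -> hnorm ip x < c.
Proof.
move=> c0; rewrite -hnorm_sq => H.
by rewrite -(ltr_pXn2r (n:=2)) ?nnegrE ?hnorm_ge0.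
Qed.

Lemma hnorm_le_sq x c : hnorm ip x <= c -> ip x x <= c ^+ 2.
Proof.
move=> H; rewrite -hnorm_sq; have := hnorm_ge0 x.
move: H; set a := hnorm ip x => *; nra.
Qed.

Variable h : V.
Hypothesis hh : ip h h = 1.

Lemma ip_h_perp x : ip h (perp ip h x) = 0.
Proof. by rewrite /perp ipBr ipZr hh mulr1 subrr. Qed.

Lemma ip_decomp a b u : ip h u = 0 ->
  ip (a *: u + b *: h) (a *: u + b *: h) = a ^+ 2 * ip u u + b ^+ 2.
Proof.
move=> hu; rewrite !ipDl !ipDr !ipZl !ipZr hh (ip_sym HV u h) hu; ring.
Qed.

End Aux.
Unset Implicit Arguments.

Lemma key_ineq (R : realType) (a m c : R) : 0 < m -> m <= a -> 0 <= c -> c < 1 ->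
  (a * c) ^+ 2 + (m * (1 - c)) ^+ 2 <= a ^+ 2.
Proof.
move=> m0 ma c0 c1.
have h1 : (1 - c) ^+ 2 <= 1 - c ^+ 2.
  have : 0 <= c * (1 - c) by rewrite mulr_ge0 // subr_ge0 ltW.
  move=> H; rewrite !expr2; lra.
have hm : m * m <= a * a by rewrite ler_pM // ltW.
have h2 : m * m * (1 - c) ^+ 2 <= a * a * (1 - c) ^+ 2.
  by rewrite ler_wpM2r // sqr_ge0.
have h3 : a * a * (1 - c) ^+ 2 <= a * a * (1 - c ^+ 2).
  by rewrite ler_wpM2l // mulr_ge0 // ltW // (lt_le_trans m0).
rewrite !exprMn; move: h2 h3; rewrite !expr2 => h2 h3; lra.
Qed.

Theorem mainTheorem18 (R : realType) (V : lmodType R) (ip : V -> V -> R)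
  (HV : is_hilbert ip) (Hdim : dim_ge2 V) (h : V) (Hh : hnorm ip h = 1) :
  (forall P : seq V, (forall p, p \in P -> Hplus ip h p) ->
     exists s, right_bound ip h (fun p => p \in P) s) /\
  (forall x y : V, Hplus ip h x -> Hplus ip h y ->
     ((exists s, left_bound ip h (fun p => p = x \/ p = y) s) <->
      hnorm ip (perp ip h x - perp ip h y) < comp_h ip h x + comp_h ip h y)).
Proof.
have hh : ip h h = 1 by rewrite -(hnorm_sq HV) Hh expr1n.
have ipZr := ipZr HV; have ipDr := ipDr HV; have ipBr := ipBr HV.
have ipZl := ipZl HV; have ipDl := ipDl HV; have ipBl := ipBl HV.
have ip_h_perp := ip_h_perp HV h hh; have ip_decomp := ip_decomp HV h hh.
have hnorm_ge0 := @hnorm_ge0 _ _ ip; have hnorm_sq := hnorm_sq HV.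
have hnorm_le_sq := @hnorm_le_sq _ _ _ HV.
have hnorm_le := @hnorm_le _ _ _ HV.
have hnorm_lt := @hnorm_lt _ _ _ HV.
have hnorm_triB := @hnorm_triB _ _ _ HV.
split.
  move=> P _.
  pose t := 1 + \sum_(q <- P) hnorm ip q.
  have S0 : 0 <= \sum_(q <- P) hnorm ip q.
    by apply: sumr_ge0 => q _; exact: hnorm_ge0.
  have t0 : 0 < t by rewrite /t; lra.
  exists (t *: h); split; first by rewrite /Hplus ipZr hh mulr1.
  move=> p pP; rewrite /prec /comp_h /perp ipZr hh mulr1 subrr subr0.
  rewrite /t.
  have : hnorm ip p <= \sum_(q <- P) hnorm ip q.
    clear t t0 S0; elim: P pP => // q P IH; rewrite in_cons big_cons => /orP [/eqP ->|/IH H].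
      by rewrite lerDl sumr_ge0 // => r _; exact: hnorm_ge0.
    by apply: (le_trans H); rewrite lerDr hnorm_ge0.
  move=> H; apply: (le_trans H); rewrite lerDr //.
move=> x y Hx Hy; rewrite /Hplus in Hx Hy; rewrite /comp_h; split.
  case=> s [Hs Hb].
  have Px := Hb x (or_introl erefl); have Py := Hb y (or_intror erefl).
  rewrite /prec /comp_h in Px Py.
  have dec z : s - perp ip h z = 1 *: (perp ip h s - perp ip h z) + ip h s *: h.
    by rewrite scale1r /perp addrAC subrK.
  have key z : 0 < ip h z -> hnorm ip (s - perp ip h z) <= ip h z ->
      hnorm ip (perp ip h s - perp ip h z) < ip h z.
    move=> z0 Hz; apply: hnorm_lt => //; first exact: ltW.
    have := hnorm_le_sq _ _ Hz; rewrite dec ip_decomp //; last first.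
      by rewrite ipBr !ip_h_perp // subr0.
    rewrite expr1n mul1r => H.
    have : 0 < ip h s ^+ 2 by rewrite exprn_gt0.
    move=> hs2; lra.
  have kx := key x Hx Px; have ky := key y Hy Py.
  have := hnorm_triB (perp ip h s - perp ip h y) (perp ip h s - perp ip h x).
  have -> : perp ip h s - perp ip h y - (perp ip h s - perp ip h x)
          = perp ip h x - perp ip h y.
    by move: (perp ip h s) (perp ip h x) (perp ip h y) => ps px py; rewrite opprB addrC addrA subrK.
  lra.
move=> Hd.
set a := ip h x in Hx Hd *; set b := ip h y in Hy Hd *.
set u := perp ip h x - perp ip h y in Hd.
set d := hnorm ip u in Hd.
have ab0 : 0 < a + b by lra.
have d0 : 0 <= d := hnorm_ge0 u.
pose c := d / (a + b).
have c0 : 0 <= c by rewrite divr_ge0 // ltW.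
have c1 : c < 1 by rewrite ltr_pdivrMr // mul1r.
pose m := Num.min a b.
have ma : m <= a by rewrite ge_min lexx.
have mb : m <= b by rewrite ge_min lexx orbT.
have m0 : 0 < m by rewrite lt_min Hx Hy.
pose e := m * (1 - c).
have e0 : 0 < e by rewrite mulr_gt0 // subr_gt0.
pose l := a / (a + b).
have hu : ip h u = 0.
  by rewrite /u ipBr !ip_h_perp subr0.
have D : ip u u = d ^+ 2 by rewrite hnorm_sq.
exists (perp ip h x - l *: u + e *: h); split.
  rewrite /Hplus ipDr ipBr ipZr ipZr hh hu ip_h_perp //; lra.
have abn : a + b != 0 by rewrite lt0r_neq0.
have ld : l * d = a * c by rewrite /l /c; field.
have ld' : (1 - l) * d = b * c.
  by rewrite /c /l; field.
move=> p [->|->]; rewrite /prec /comp_h; (apply: hnorm_le;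
  first by apply: ltW; first [exact: Hx | exact: Hy]).
  rewrite (_ : _ - _ = (- l) *: u + e *: h); last first.
    by rewrite scaleNr; move: (perp ip h x) (l *: u) (e *: h) => A B C; rewrite addrAC (addrAC A) subrr add0r.
  rewrite ip_decomp // D.
  have -> : (- l) ^+ 2 * d ^+ 2 = (a * c) ^+ 2 by rewrite sqrrN -exprMn ld.
  exact: key_ineq.
rewrite (_ : _ - _ = (1 - l) *: u + e *: h); last first.
  rewrite scalerBl scale1r; move: (l *: u) (e *: h) => L C; rewrite /u.
  move: (perp ip h x) (perp ip h y) => A B.
  by rewrite addrAC (addrAC A).
rewrite ip_decomp // D -exprMn ld'; exact: key_ineq.
Qed.
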